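(* Let $R$ be a commutative ring with identity. Then $R[X]_A$ is a residually Noetherian ring if and only if $R$ is a residually Noetherian ring.
   Context: $X$ is an indeterminate over $R$, $A=\{f\in R[X]\mid f(0)=1\}$, and $R[X]_A$ is the localization of $R[X]$ at $A$. A ring $T$ is residually Noetherian if $T/\mathfrak p$ is a Noetherian domain for every prime ideal $\mathfrak p$ of $T$. *)

(* Defs.v *)
From HB Require Import structures.
From mathcomp Require Import all_boot all_order all_algebra.
Set Implicit Arguments. Unset Strict Implicit. Unset Printing Implicit Defensive.
Import GRing.Theory.
Local Open Scope ring_scope.

Definition is_ideal (T : comPzRingType) (I : T -> Prop) : Prop :=
  I 0 /\ (forall x y, I x -> I y -> I (x + y)) /\ (forall a x, I x -> I (a * x)).

Definition is_prime_ideal (T : comPzRingType) (p : T -> Prop) : Prop :=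
  is_ideal p /\ ~ p 1 /\ (forall a b, p (a * b) -> p a \/ p b).

Definition in_ideal_span (T : comPzRingType) (p : T -> Prop) (s : seq T) (x : T) : Prop :=
  exists y, exists c : seq T,
    p y /\ size c = size s /\ x = y + \sum_(i < size s) c`_i * s`_i.

(* Ideals of T/p are identified with ideals J of T containing p (correspondence
   theorem); J/p finitely generated means J = p + (s) for a finite list s. *)
Definition quotient_noetherian (T : comPzRingType) (p : T -> Prop) : Prop :=
  forall J : T -> Prop, is_ideal J -> (forall x, p x -> J x) ->
    exists s : seq T, forall x, J x <-> in_ideal_span p s x.

Definition quotient_domain (T : comPzRingType) (p : T -> Prop) : Prop :=
  ~ p 1 /\ (forall a b, p (a * b) -> p a \/ p b).

Definition residually_noetherian (T : comPzRingType) : Prop :=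
  forall p : T -> Prop, is_prime_ideal p ->
    quotient_domain p /\ quotient_noetherian p.

Definition setA (R : comNzRingType) (f : {poly R}) : Prop := f.[0] = 1.

(* phi : R[X] -> T exhibits T as the localization R[X]_A (characterization by
   the standard universal/structural conditions, as Mathlib's IsLocalization). *)
Definition is_localization_A (R : comNzRingType) (T : comPzRingType) (phi : {rmorphism {poly R} -> T}) : Prop :=
  (forall a, setA a -> exists b, phi a * b = 1) /\
  (forall t, exists f a, setA a /\ t * phi a = phi f) /\
  (forall f g, phi f = phi g <-> exists a, setA a /\ a * f = a * g).

(* Main.v *)
Require Import Defs.
From HB Require Import structures.
From mathcomp Require Import all_boot all_order all_algebra.
From mathcomp Require Import zify ring.
Set Implicit Arguments. Unset Strict Implicit. Unset Printing Implicit Defensive.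
Import GRing.Theory.
Local Open Scope ring_scope.

Section Span.
Variable T : comPzRingType.

Lemma ideal_sum (I : T -> Prop) (J : Type) (r : seq J) (Pr : pred J) (F : J -> T) :
  is_ideal I -> (forall i, Pr i -> I (F i)) -> I (\sum_(i <- r | Pr i) F i).
Proof. by move=> [I0 [ID IM]] H; apply: big_ind. Qed.

Lemma ideal_opp (I : T -> Prop) x : is_ideal I -> I x -> I (- x).
Proof. by move=> [I0 [ID IM]] Hx; rewrite -mulN1r; apply: IM. Qed.

Lemma ideal_mulr (I : T -> Prop) x a : is_ideal I -> I x -> I (x * a).
Proof. by move=> [I0 [ID IM]] Hx; rewrite mulrC; apply: IM. Qed.

Lemma span_ideal (p : T -> Prop) s : is_ideal p -> is_ideal (in_ideal_span p s).
Proof.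
move=> [p0 [pD pM]]; split; [|split].
- exists 0, (nseq (size s) 0); split=> //; split; first by rewrite size_nseq.
  rewrite add0r big1 // => i _; by rewrite nth_nseq if_same mul0r.
- move=> x y [y1 [c1 [h1 [_ ->]]]] [y2 [c2 [h2 [_ ->]]]].
  exists (y1 + y2), (mkseq (fun i => c1`_i + c2`_i) (size s)).
  split; first by apply: pD. split; first by rewrite size_mkseq.
  rewrite -!addrA; congr (_ + _); rewrite addrCA; congr (_ + _).
  rewrite -big_split /=; apply: eq_bigr => i _.
  by rewrite nth_mkseq // mulrDl.
- move=> a x [y1 [c1 [h1 [_ ->]]]].
  exists (a * y1), (mkseq (fun i => a * c1`_i) (size s)).
  split; first by apply: pM. split; first by rewrite size_mkseq.
  rewrite mulrDr mulr_sumr; congr (_ + _); apply: eq_bigr => i _.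
  by rewrite nth_mkseq // mulrA.
Qed.

Lemma span_p (p : T -> Prop) s x : p x -> in_ideal_span p s x.
Proof.
move=> px; exists x, (nseq (size s) 0); split=> //; split; first by rewrite size_nseq.
rewrite big1 ?addr0 // => i _; by rewrite nth_nseq if_same mul0r.
Qed.

Lemma span_gen (p : T -> Prop) s i : is_ideal p -> (i < size s)%N -> in_ideal_span p s s`_i.
Proof.
move=> [p0 _] hi; exists 0, (mkseq (fun j => (j == i)%:R) (size s)).
split=> //; split; first by rewrite size_mkseq.
rewrite add0r (bigD1 (Ordinal hi)) //= nth_mkseq // eqxx mul1r big1 ?addr0 //.
move=> j hj; rewrite nth_mkseq //.
have -> : (nat_of_ord j == i) = false.
  by apply/negbTE; apply: contra hj => /eqP e; apply/eqP/val_inj.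
by rewrite mul0r.
Qed.

Lemma span_min (p J : T -> Prop) s x : is_ideal J -> (forall y, p y -> J y) ->
  (forall i, (i < size s)%N -> J s`_i) -> in_ideal_span p s x -> J x.
Proof.
move=> hJ hpJ hs [y [c [py [_ ->]]]].
have [J0 [JD JM]] := hJ; apply: JD; first by apply: hpJ.
apply: ideal_sum => //= i _; apply: JM; apply: hs; exact: ltn_ord.
Qed.

Lemma span_map (p : T -> Prop) (U : Type) (h : U -> T) (G : seq U) u0 r :
  in_ideal_span p (map h G) r ->
  exists y c, p y /\ r = y + \sum_(i < size G) c`_i * h (nth u0 G i).
Proof.
move=> [y [c [py [_ ->]]]]; exists y, c; split=> //; congr (_ + _).
rewrite -(big_mkord xpredT (fun i => c`_i * (map h G)`_i)) size_map big_mkord.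
by apply: eq_bigr => i _; rewrite (nth_map u0).
Qed.

End Span.

Section Hilbert.
Variable R : comNzRingType.
Variable p : R -> Prop.
Hypothesis hp : is_ideal p.
Hypothesis hpn : quotient_noetherian p.

Definition polyP (f : {poly R}) := forall i, p f`_i.

Lemma polyP_ideal : is_ideal polyP.
Proof.
have [p0 [pD pM]] := hp.
split; [|split].
- by move=> i; rewrite coef0.
- by move=> x y hx hy i; rewrite coefD; apply: pD.
- move=> a x hx i; rewrite coefM; apply: ideal_sum => // j _; apply: pM; apply: hx.
Qed.

Lemma polyP_CX r n : p r -> polyP (r%:P * 'X^n).
Proof.
move=> pr i; rewrite coefCM; apply: ideal_mulr => //.
Qed.

Variable J : {poly R} -> Prop.
Hypothesis hJ : is_ideal J.
Hypothesis hPJ : forall f, polyP f -> J f.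

Definition L n (r : R) := exists f, J f /\ (size f <= n.+1)%N /\ f`_n = r.

Lemma L_ideal n : is_ideal (L n).
Proof.
have [J0 [JD JM]] := hJ.
split; [|split].
- by exists 0; rewrite size_poly0 coef0.
- move=> x y [f [Jf [sf <-]]] [g [Jg [sg <-]]]; exists (f + g); split; first exact: JD.
  rewrite coefD; split=> //; apply: leq_trans (size_polyD _ _) _; rewrite geq_max sf sg //.
- move=> a x [f [Jf [sf <-]]]; exists (a%:P * f); split; first exact: JM.
  rewrite coefCM; split=> //; apply: leq_trans (size_polyMleq _ _) _.
  have := size_polyC_leq1 a; move: sf; set u := size f; set v := size _; move=> *; lia.
Qed.

Lemma L_p n r : p r -> L n r.
Proof.
move=> pr; exists (r%:P * 'X^n); split; first by apply: hPJ; apply: polyP_CX.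
rewrite coefCM coefXn eqxx mulr1; split=> //.
apply: leq_trans (size_polyMleq _ _) _; rewrite size_polyXn.
have := size_polyC_leq1 r; lia.
Qed.

Lemma L_mono n m r : (n <= m)%N -> L n r -> L m r.
Proof.
move=> nm [f [Jf [sf <-]]]; exists ('X^(m - n) * f); split.
  by have [_ [_ JM]] := hJ; apply: JM.
rewrite coefXnM; split.
  apply: leq_trans (size_polyMleq _ _) _; rewrite size_polyXn; lia.
have -> : (m < m - n)%N = false by lia.
by rewrite subKn.
Qed.

Definition Linf r := exists n, L n r.

Lemma Linf_ideal : is_ideal Linf.
Proof.
split; [|split].
- by exists 0%N; have [] := L_ideal 0.
- move=> x y [n hx] [m hy]; exists (maxn n m).
  have [_ [LD _]] := L_ideal (maxn n m); apply: LD; apply: L_mono hx || apply: L_mono hy;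
  by rewrite ?leq_maxl ?leq_maxr.
- move=> a x [n hx]; exists n; have [_ [_ LM]] := L_ideal n; exact: LM.
Qed.

Lemma seq_bound (s : seq R) : (forall i, (i < size s)%N -> Linf s`_i) ->
  exists N, forall i, (i < size s)%N -> L N s`_i.
Proof.
elim: s => [|x s IH] H; first by exists 0%N.
have [N HN] : exists N, forall i, (i < size s)%N -> L N s`_i.
  by apply: IH => i hi; apply: (H i.+1).
have [n hn] := H 0%N isT.
exists (maxn n N) => [[|i]] hi /=.
  by apply: L_mono hn; rewrite leq_maxl.
by apply: L_mono (HN i hi); rewrite leq_maxr.
Qed.

Lemma L_stable : exists N, forall n r, L n r -> L N r.
Proof.
have [s Hs] := hpn Linf_ideal (fun x px => ex_intro _ 0%N (L_p 0 px)).
have [N HN] := seq_bound (fun i hi => proj2 (Hs _) (span_gen hp hi)).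
exists N => n r hr.
apply: (span_min (L_ideal N) (@L_p N) HN); apply/Hs; by exists n.
Qed.

Lemma choose_seq n (s : seq R) : (forall i, (i < size s)%N -> L n s`_i) ->
  exists G : seq {poly R}, (forall g, g \in G -> J g /\ (size g <= n.+1)%N) /\
     map (fun g : {poly R} => g`_n) G = s.
Proof.
elim: s => [|x s IH] H; first by exists [::].
have [G [HG EG]] : exists G : seq {poly R}, (forall g, g \in G -> J g /\ (size g <= n.+1)%N) /\
     map (fun g : {poly R} => g`_n) G = s by apply: IH => i hi; apply: (H i.+1).
have [f [Jf [sf ef]]] := H 0%N isT.
exists (f :: G); split; last by rewrite /= ef EG.
by move=> g; rewrite inE => /orP [/eqP -> | /HG].
Qed.

Lemma L_gens n : exists G : seq {poly R}, (forall g, g \in G -> J g /\ (size g <= n.+1)%N) /\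
  forall r, L n r -> in_ideal_span p (map (fun g : {poly R} => g`_n) G) r.
Proof.
have [s Hs] := hpn (L_ideal n) (@L_p n).
have [G [HG EG]] := choose_seq (fun i hi => proj2 (Hs _) (span_gen hp hi)).
by exists G; split=> // r /Hs; rewrite EG.
Qed.

Lemma all_gens N : exists G : seq {poly R}, (forall g, g \in G -> J g) /\
  forall n, (n <= N)%N -> exists Gn : seq {poly R},
    (forall g, g \in Gn -> g \in G /\ (size g <= n.+1)%N) /\
    forall r, L n r -> in_ideal_span p (map (fun g : {poly R} => g`_n) Gn) r.
Proof.
elim: N => [|N [G [HG HN]]].
  have [G0 [H0 E0]] := L_gens 0; exists G0; split; first by move=> g /H0 [].
  move=> n; rewrite leqn0 => /eqP ->; exists G0; split=> // g hg.
  by split=> //; have [] := H0 g hg.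
have [G1 [H1 E1]] := L_gens N.+1.
exists (G ++ G1); split.
  by move=> g; rewrite mem_cat => /orP [/HG|/H1 []].
move=> n; rewrite leq_eqVlt => /orP [/eqP ->|hn].
  exists G1; split=> // g hg; rewrite mem_cat hg orbT; split=> //.
  by have [] := H1 g hg.
have [Gn [HGn EGn]] := HN n hn; exists Gn; split=> // g hg.
by have [h1 h2] := HGn g hg; rewrite mem_cat h1.
Qed.

Lemma size_drop_top (q : {poly R}) k : (size q <= k.+1)%N -> q`_k = 0 -> (size q <= k)%N.
Proof.
move=> hs hq; rewrite leq_eqVlt in hs; case/orP: hs => [/eqP e|] //.
have : lead_coef q == 0 by rewrite /lead_coef e /= hq.
by rewrite lead_coef_eq0 => /eqP qz; move: e; rewrite qz size_poly0.
Qed.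

Lemma size_CM_le (c : R) (q : {poly R}) : (size (c%:P * q)%R <= size q)%N.
Proof.
apply: leq_trans (size_polyMleq _ _) _; have := size_polyC_leq1 c.
set u := size c%:P; set v := size q; lia.
Qed.

Lemma size_sum_le (I : Type) (r : seq I) (P : pred I) (F : I -> {poly R}) k :
  (forall i, P i -> (size (F i) <= k)%N) -> (size (\sum_(i <- r | P i) F i)%R <= k)%N.
Proof.
move=> H; apply: (big_ind (fun q : {poly R} => (size q <= k)%N)) => //.
  by rewrite size_poly0.
move=> x y hx hy; apply: leq_trans (size_polyD _ _) _; by rewrite geq_max hx hy.
Qed.

Theorem hilbert : exists G : seq {poly R}, forall f, J f <-> in_ideal_span polyP G f.
Proof.
have [N HN] := L_stable.
have [G [HG HGn]] := all_gens N.
have hPi := polyP_ideal.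
have spanG : forall g, g \in G -> in_ideal_span polyP G g.
  by move=> g hg; rewrite -(nth_index 0 hg); apply: span_gen => //; rewrite index_mem.
have spanJ : forall f, in_ideal_span polyP G f -> J f.
  move=> f; apply: span_min => // i hi; apply: HG; exact: mem_nth.
have [S0 [SD SM]] := span_ideal G hPi.
exists G => f; split; last exact: spanJ.
move=> Jf.
suff H : forall k (f : {poly R}), (size f <= k)%N -> J f -> in_ideal_span polyP G f by apply: (H (size f)).
elim=> [|k IH] {Jf}f sf Jf.
  by move: sf; rewrite size_poly_leq0 => /eqP ->.
have hm : L (minn k N) f`_k.
  case: (leqP k N) => hk.
    by exists f.
  apply: (HN k); by exists f.
set m := minn k N in hm *.
have [Gm [HGm EGm]] := HGn m (geq_minr _ _).
have [y [c [py ey]]] := span_map 0 (EGm _ hm).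
pose h := y%:P * 'X^k + \sum_(i < size Gm) ((c`_i)%:P * 'X^(k - m)) * Gm`_i.
have hh : in_ideal_span polyP G h.
  apply: SD; first by apply: span_p; apply: polyP_CX.
  apply: ideal_sum => [|i _]; first exact: span_ideal.
  apply: SM; apply: spanG; have [] := HGm _ (mem_nth 0 (ltn_ord i)) => //.
have hmk : (m <= k)%N by apply: geq_minl.
have Jf' : J (f - h) by have [_ [JD JM]] := hJ; apply: JD => //; apply: ideal_opp => //; exact: spanJ.
have sf' : (size (f - h)%R <= k)%N.
  apply: size_drop_top.
    apply: leq_trans (size_polyD _ _) _; rewrite geq_max sf size_polyN /=.
    apply: leq_trans (size_polyD _ _) _; rewrite geq_max; apply/andP; split.
      by apply: leq_trans (size_CM_le _ _) _; rewrite size_polyXn.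
    apply: size_sum_le => i _.
    have [_ sg] := HGm _ (mem_nth 0 (ltn_ord i)).
    rewrite -mulrA; apply: leq_trans (size_CM_le _ _) _.
    apply: leq_trans (size_polyMleq _ _) _; rewrite size_polyXn.
    move: sg; set u := size _; move=> sg; lia.
  rewrite coefB coefD coefCM coefXn eqxx mulr1 coef_sum ey; apply/eqP; rewrite subr_eq0; apply/eqP.
  congr (_ + _); apply: eq_bigr => i _.
  rewrite -mulrA coefCM coefXnM.
  have -> : (k < k - m)%N = false by lia.
  by rewrite subKn.
have := SD _ _ (IH _ sf' Jf') hh.
by rewrite subrK.
Qed.

End Hilbert.

From Stdlib Require Import ClassicalEpsilon.

Section Main.
Variable R : comNzRingType.
Variable T : comPzRingType.
Variable phi : {rmorphism {poly R} -> T}.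
Hypothesis hloc : is_localization_A phi.

Lemma setA1 : @setA R 1.
Proof. by rewrite /setA -polyC1 hornerC. Qed.

Lemma setAM (a b : {poly R}) : setA a -> setA b -> setA (a * b).
Proof. by rewrite /setA hornerM => -> ->; rewrite mulr1. Qed.

Definition rep (t : T) : {f : {poly R} | exists a, setA a /\ t * phi a = phi f}.
Proof.
apply: constructive_indefinite_description.
have [_ [H _]] := hloc; have [f [a [ha e]]] := H t; by exists f, a.
Defined.

Definition ev (t : T) : R := (sval (rep t)).[0].

Lemma ev_spec t f a : setA a -> t * phi a = phi f -> ev t = f.[0].
Proof.
move=> ha e; rewrite /ev; case: (rep t) => f' [a' [ha' e']] /=.
have [_ [_ H]] := hloc.
have : phi (a' * f) = phi (a * f') by rewrite !rmorphM -e -e'; ring.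
move/H => [c [hc ec]].
have := congr1 (fun q => q.[0]) ec => /=.
rewrite !hornerM hc ha ha' !mul1r => ->; by [].
Qed.

Lemma ev_phi g : ev (phi g) = g.[0].
Proof. by apply: (ev_spec setA1); rewrite rmorph1 mulr1. Qed.

Lemma ev0 : ev 0 = 0.
Proof. by rewrite -(rmorph0 phi) ev_phi horner0. Qed.

Lemma ev1 : ev 1 = 1.
Proof. by rewrite -(rmorph1 phi) ev_phi -polyC1 hornerC. Qed.

Lemma rep_ex t : exists f a, setA a /\ t * phi a = phi f.
Proof. by have [_ [H _]] := hloc; apply: H. Qed.

Lemma ev_add x y : ev (x + y) = ev x + ev y.
Proof.
have [f [a [ha e]]] := rep_ex x; have [g [b [hb e2]]] := rep_ex y.
rewrite (ev_spec ha e) (ev_spec hb e2).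
have E : (x + y) * phi (a * b) = phi (f * b + g * a).
  by rewrite rmorphD !rmorphM -e -e2; ring.
by rewrite (ev_spec (setAM ha hb) E) hornerD !hornerM ha hb !mulr1.
Qed.

Lemma ev_mul x y : ev (x * y) = ev x * ev y.
Proof.
have [f [a [ha e]]] := rep_ex x; have [g [b [hb e2]]] := rep_ex y.
rewrite (ev_spec ha e) (ev_spec hb e2).
have E : (x * y) * phi (a * b) = phi (f * g).
  by rewrite !rmorphM -e -e2; ring.
by rewrite (ev_spec (setAM ha hb) E) hornerM.
Qed.

Lemma ev_sum (I : Type) (r : seq I) (F : I -> T) :
  ev (\sum_(i <- r) F i) = \sum_(i <- r) ev (F i).
Proof. exact: (big_morph ev ev_add ev0). Qed.

End Main.

Lemma dirT_R (R : comNzRingType) (T : comPzRingType) (phi : {rmorphism {poly R} -> T}) :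
  is_localization_A phi -> residually_noetherian T -> residually_noetherian R.
Proof.
move=> hloc HT p hprime.
have [hpi [hp1 hpp]] := hprime.
split; first by split.
have [p0 [pD pM]] := hpi.
pose ev' := ev hloc.
pose P := fun t => p (ev' t).
have hP : is_prime_ideal P.
  split; [split; [|split]|split].
  - by rewrite /P /ev' ev0.
  - by move=> x y; rewrite /P /ev' ev_add; apply: pD.
  - by move=> a x; rewrite /P /ev' ev_mul; apply: pM.
  - by rewrite /P /ev' ev1.
  - by move=> a b; rewrite /P /ev' ev_mul; apply: hpp.
have [_ HnP] := HT P hP.
move=> J hJ hpJ.
have [J0 [JD JM]] := hJ.
pose J' := fun t => J (ev' t).
have hJ' : is_ideal J'.
  split; [|split]; rewrite /J' /ev'.
  - by rewrite ev0.
  - by move=> x y hx hy; rewrite ev_add; apply: JD.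
  - by move=> a x hx; rewrite ev_mul; apply: JM.
have [s Hs] := HnP J' hJ' (fun x hx => hpJ _ hx).
have hsp := span_ideal (map ev' s) hpi.
have [S0 [SD SM]] := hsp.
have gen : forall i, (i < size s)%N -> in_ideal_span p (map ev' s) (ev' s`_i).
  move=> i hi; rewrite -(nth_map 0 0 ev' hi); apply: span_gen => //; by rewrite size_map.
exists (map ev' s) => x; split.
- move=> Jx.
  have : J' (phi x%:P) by rewrite /J' /ev' ev_phi hornerC.
  move/Hs => [y [c [py [_ e]]]].
  have -> : x = ev' (phi x%:P) by rewrite /ev' ev_phi hornerC.
  rewrite e /ev' ev_add ev_sum; apply: SD; first exact: span_p.
  apply: ideal_sum => // i _; rewrite ev_mul; apply: SM; exact: gen.
- apply: span_min => // i; rewrite size_map => hi.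
  rewrite (nth_map 0 0 ev' hi); apply/Hs; exact: (span_gen (proj1 hP) hi).
Qed.

Lemma dirR_T (R : comNzRingType) (T : comPzRingType) (phi : {rmorphism {poly R} -> T}) :
  is_localization_A phi -> residually_noetherian R -> residually_noetherian T.
Proof.
move=> hloc HR P hprime.
have [hPi [hP1 hPp]] := hprime.
split; first by split.
have [P0 [PD PM]] := hPi.
pose p := fun r : R => P (phi r%:P).
have hp : is_prime_ideal p.
  split; [split; [|split]|split]; rewrite /p.
  - by rewrite polyC0 rmorph0.
  - by move=> x y hx hy; rewrite polyCD rmorphD; apply: PD.
  - by move=> a x hx; rewrite polyCM rmorphM; apply: PM.
  - by rewrite polyC1 rmorph1.
  - by move=> a b; rewrite polyCM rmorphM; apply: hPp.
have [_ hpn] := HR p hp.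
have hpi : is_ideal p by case: hp.
have polyP_P : forall f, polyP p f -> P (phi f).
  move=> f hf; rewrite -[f]coefK poly_def rmorph_sum; apply: ideal_sum => // i _.
  rewrite -mul_polyC rmorphM; apply: ideal_mulr => //; exact: hf.
move=> J hJ hPJ.
have [J0 [JD JM]] := hJ.
pose J0' := fun f => J (phi f).
have hJ0 : is_ideal J0'.
  split; [|split]; rewrite /J0'.
  - by rewrite rmorph0.
  - by move=> x y hx hy; rewrite rmorphD; apply: JD.
  - by move=> a x hx; rewrite rmorphM; apply: JM.
have [G HG] := hilbert hpi hpn hJ0 (fun f hf => hPJ _ (polyP_P f hf)).
have [S0 [SD SM]] := span_ideal (map phi G) hPi.
exists (map phi G) => t; split.
- move=> Jt.
  have [_ [Hr _]] := hloc; have [f [a [ha e]]] := Hr t.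
  have [Hu _] := hloc; have [b eb] := Hu a ha.
  have : J0' f by rewrite /J0' -e; apply: ideal_mulr.
  move/HG => [y [c [py [_ ef]]]].
  have -> : t = phi f * b by rewrite -e -mulrA eb mulr1.
  apply: ideal_mulr; first exact: span_ideal.
  rewrite ef rmorphD rmorph_sum; apply: SD; first by apply: span_p; apply: polyP_P.
  apply: ideal_sum => [|i _]; first exact: span_ideal.
  rewrite rmorphM; apply: SM.
  rewrite -(nth_map 0 0 phi (ltn_ord i)); apply: span_gen => //; by rewrite size_map.
- apply: span_min => // i; rewrite size_map => hi.
  rewrite (nth_map 0 0 phi hi); apply: (proj2 (HG _)).
  apply: span_gen => //; exact: polyP_ideal.
Qed.

Theorem mainTheorem3 (R : comNzRingType) (T : comPzRingType) (phi : {rmorphism {poly R} -> T}) :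
  is_localization_A phi ->
  (residually_noetherian T <-> residually_noetherian R).
Proof.
move=> hloc; split; [exact: (dirT_R hloc) | exact: (dirR_T hloc)].
Qed.
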